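(* Let $J_1,J_2$ be abelian topological semigroups and $n\in\mathbf{Z}_+$. If $P^n(J_1)$ is finite dimensional, then $P^n(J_1\times J_2)=\sum_{m=0}^n P^m(J_1)\otimes P^{n-m}(J_2)$, i.e. every $p\in P^n(J_1\times J_2)$ is a finite sum of functions $(s,t)\mapsto f(s)g(t)$ with $f\in P^m(J_1)$, $g\in P^{n-m}(J_2)$ for some $0\le m\le n$, and every such sum lies in $P^n(J_1\times J_2)$.
   Context: $\mathbf{Z}_+=\{0,1,2,\dots\}$. For an abelian topological semigroup $S$, a continuous $p:S\to\mathbf{C}$ is a polynomial of degree at most $n$ if for all $s,t\in S$ the map $m\mapsto p(s+mt)$, $m\in\mathbf{Z}_+$, is a polynomial in $m$ of degree at most $n$; $P^n(S)$ is the space of these. $J_1\times J_2$ carries the product topology and componentwise operation. *)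

(* Defs.v *)
From HB Require Import structures.
From mathcomp Require Import all_boot all_order all_algebra.
From mathcomp Require Import all_classical all_reals topology normedtype.
From mathcomp Require Import complex.
Set Implicit Arguments. Unset Strict Implicit. Unset Printing Implicit Defensive.
Import Order.TTheory GRing.Theory Num.Theory numFieldTopology.Exports numFieldNormedType.Exports.
Local Open Scope ring_scope.

Definition abelian_top_semigroup (J : topologicalType) (op : J -> J -> J) : Prop :=
  associative op /\ commutative op /\
  continuous (fun x : J * J => op x.1 x.2).

(* componentwise operation on J1 * J2 (product topology is the canonical one) *)
Definition prod_op (J1 J2 : Type) (op1 : J1 -> J1 -> J1) (op2 : J2 -> J2 -> J2)
  : J1 * J2 -> J1 * J2 -> J1 * J2 :=
  fun x y => (op1 x.1 y.1, op2 x.2 y.2).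

(* s + m t := s + t + ... + t  (m copies of t); s + 0 t = s *)
Definition addmul (J : Type) (op : J -> J -> J) (s t : J) (m : nat) : J :=
  iter m (fun x => op x t) s.

(* continuity of a complex valued function, C = R[i] with its usual
   (product = Euclidean) topology: real and imaginary parts continuous *)
Definition continuousC (R : realType) (J : topologicalType) (p : J -> R[i]) : Prop :=
  continuous (fun x => complex.Re (p x)) /\ continuous (fun x => complex.Im (p x)).

Definition is_poly_deg (R : realType) (J : topologicalType) (op : J -> J -> J)
  (n : nat) (p : J -> R[i]) : Prop :=
  continuousC p /\
  forall s t : J, exists q : {poly R[i]},
    (size q <= n.+1)%N /\ forall m : nat, p (addmul op s t m) = q.[m%:R].

Definition Pn_finite_dim (R : realType) (J : topologicalType) (op : J -> J -> J)
  (n : nat) : Prop :=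
  exists (k : nat) (b : 'I_k -> J -> R[i]),
    (forall i, is_poly_deg op n (b i)) /\
    forall p, is_poly_deg op n p ->
      exists c : 'I_k -> R[i], p = (fun x => \sum_(i < k) c i * b i x).

(* Main.v *)
Require Import Defs.
From HB Require Import structures.
From mathcomp Require Import all_boot all_order all_algebra.
From mathcomp Require Import all_classical all_reals topology normedtype.
From mathcomp Require Import complex.
Import Order.TTheory GRing.Theory Num.Theory numFieldTopology.Exports numFieldNormedType.Exports.
Local Open Scope ring_scope.
From mathcomp Require Import ring zify.
Set Implicit Arguments. Unset Strict Implicit.
Section Poly1.
Variable K : numFieldType.
Lemma poly_eq_natS (p q : {poly K}) :
  (forall m : nat, p.[(m.+1)%:R] = q.[(m.+1)%:R]) -> p = q.
Proof.
move=> h; apply/eqP; rewrite -subr_eq0; apply/negPn/negP => nz.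
pose rs := [seq ((m.+1)%:R : K) | m <- iota 0 (size (p - q))].
have : (size rs < size (p - q)%R)%N.
  apply: max_poly_roots nz _ _.
    apply/allP => z /mapP [m _ ->]; by rewrite /root hornerD hornerN h subrr.
  rewrite map_inj_uniq ?iota_uniq // => a b /eqP; by rewrite eqr_nat eqSS => /eqP.
by rewrite /rs size_map size_iota ltnn.
Qed.
Lemma poly_eq_nat (p q : {poly K}) :
  (forall m : nat, p.[m%:R] = q.[m%:R]) -> p = q.
Proof. by move=> h; apply: poly_eq_natS => m; apply: h. Qed.
Lemma top_degree (N n : nat) (c : nat -> nat -> K) :
  (forall a : nat, (0 < a)%N -> exists q : {poly K}, (size q <= n.+1)%N /\
     forall m : nat, \sum_(k < N) \sum_(l < N) c k l * (a%:R) ^+ k * (m%:R) ^+ (k + l)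
                     = q.[m%:R]) ->
  forall k l, (k < N)%N -> (l < N)%N -> (n < k + l)%N -> c k l = 0.
Proof.
move=> h k0 l0 hk hl hD.
set D := (k0 + l0)%N in hD.
pose S := \sum_(k < N) \sum_(l < N) (c k l * ((k + l)%N == D)%:R) *: 'X^k.
have S0 : S = 0.
  apply: poly_eq_natS => m; rewrite horner0.
  have [q [hq hqm]] := h m.+1 isT.
  pose P := \sum_(k < N) \sum_(l < N) (c k l * (m.+1%:R) ^+ k) *: 'X^(k + l).
  have PQ : P = q.
    apply: poly_eq_nat => z; rewrite -hqm /P horner_sum; apply: eq_bigr => k _.
    rewrite horner_sum; apply: eq_bigr => l _.
    by rewrite hornerZ hornerXn.
  have : P`_D = 0 by rewrite PQ nth_default // (leq_trans hq).
  rewrite /P coef_sum /S horner_sum => e; rewrite -[in RHS]e; apply: eq_bigr => k _.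
  rewrite coef_sum horner_sum; apply: eq_bigr => l _.
  rewrite hornerZ hornerXn coefZ coefXn.
  rewrite [(D == _)%N]eq_sym; case: eqP => _; by rewrite ?mulr1 ?mulr0 ?mul0r.
have : S`_k0 = 0 by rewrite S0 coef0.
rewrite /S coef_sum (bigD1 (Ordinal hk)) //= [X in _ + X]big1 ?addr0; last first.
  move=> k /negPf hne; rewrite coef_sum big1 // => l _.
  rewrite coefZ coefXn.
  have -> : (k0 == k) = false by apply/negP => /eqP e; move: hne; rewrite -val_eqE /= e eqxx.
  by rewrite mulr0.
rewrite coef_sum (bigD1 (Ordinal hl)) //= [X in _ + X]big1 ?addr0; last first.
  move=> l /negPf hne; rewrite coefZ coefXn eqxx mulr1.
  have -> : (k0 + l == D)%N = false.
    apply/negP => /eqP e; move: hne; rewrite -val_eqE /=.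
    by move: e; rewrite /D => /addnI ->; rewrite eqxx.
  by rewrite mulr0.
by rewrite coefZ coefXn !eqxx !mulr1.
Qed.
Lemma sep_joint (N : nat) (E : nat -> nat -> K) : (0 < N)%N ->
  (forall j, exists q : {poly K}, (size q <= N)%N /\ forall i, E i j = q.[i%:R]) ->
  (forall i, exists q : {poly K}, (size q <= N)%N /\ forall j, E i j = q.[j%:R]) ->
  exists c : nat -> nat -> K, forall i j,
    E i j = \sum_(k < N) \sum_(l < N) c k l * (i%:R) ^+ k * (j%:R) ^+ l.
Proof.
move=> N0 hr hc.
have [qr hqr] := choice hr.
have [qc hqc] := choice hc.
have inj : injective (fun t : nat => (t%:R : K)).
  by move=> a b /eqP; rewrite eqr_nat => /eqP.
pose L := N.-lagrange (fun t : nat => (t%:R : K)).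
exists (fun k l => \sum_(t < N) (qc t)`_l * (tnth L t)`_k) => i j.
have e1 : forall k, (qr j)`_k = \sum_(t < N) E t j * (tnth L t)`_k.
  move=> k; rewrite {1}(lagrange_gen N0 inj (hqr j).1) coef_sum.
  by apply: eq_bigr => t _; rewrite coefCM -(hqr j).2.
rewrite (hqr j).2 (horner_coef_wide _ (hqr j).1); apply: eq_bigr => k _.
rewrite e1.
under eq_bigr => t _ do rewrite (hqc t).2 (horner_coef_wide _ (hqc t).1).
rewrite mulr_suml.
under eq_bigr => t _ do rewrite !mulr_suml.
rewrite exchange_big /=; apply: eq_bigr => l _.
rewrite !mulr_suml; apply: eq_bigr => t _; ring.
Qed.
Lemma size_lin (u v : K) : (size (u%:P + v *: 'X)%R <= 2)%N.
Proof.
apply: leq_trans (size_polyD _ _) _; rewrite geq_max.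
rewrite (leq_trans (size_polyC_leq1 _)) //.
by rewrite (leq_trans (size_scale_leq _ _)) // size_polyX.
Qed.
Lemma size_lin_exp (u v : K) k : (size ((u%:P + v *: 'X) ^+ k)%R <= k.+1)%N.
Proof.
apply: leq_trans (size_poly_exp_leq _ _) _; rewrite ltnS.
have := size_lin u v; case: (size _) => [|[|[|]]] //= _; by rewrite ?mul0n ?mul1n.
Qed.
Lemma size_sum_le (I : finType) (F : I -> {poly K}) m :
  (forall i, (size (F i) <= m)%N) -> (size (\sum_i F i)%R <= m)%N.
Proof.
move=> h; apply: (big_ind (fun p : {poly K} => (size p <= m)%N)) => //.
  by rewrite size_poly0.
by move=> p q hp hq; apply: leq_trans (size_polyD _ _) _; rewrite geq_max hp hq.
Qed.
Lemma line_poly (N n : nat) (c : nat -> nat -> K) :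
  (forall k l, (k < N)%N -> (l < N)%N -> (n < k + l)%N -> c k l = 0) ->
  forall u1 v1 u2 v2 : K, exists h : {poly K}, (size h <= n.+1)%N /\
    forall z, \sum_(k < N) \sum_(l < N) c k l * (u1 + z * v1) ^+ k * (u2 + z * v2) ^+ l
              = h.[z].
Proof.
move=> hc u1 v1 u2 v2.
exists (\sum_(k < N) \sum_(l < N)
          c k l *: ((u1%:P + v1 *: 'X) ^+ k * (u2%:P + v2 *: 'X) ^+ l)); split.
  apply: size_sum_le => k; apply: size_sum_le => l.
  case: (ltnP n (k + l)) => hkl.
    by rewrite hc // scale0r size_poly0.
  apply: leq_trans (size_scale_leq _ _) _.
  apply: leq_trans (size_polyMleq _ _) _.
  have h1 := size_lin_exp u1 v1 k; have h2 := size_lin_exp u2 v2 l.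
  move: h1 h2 hkl; set a := size _; set b := size _; lia.
move=> z; rewrite horner_sum; apply: eq_bigr => k _.
rewrite horner_sum; apply: eq_bigr => l _.
rewrite hornerZ hornerM !horner_exp !hornerD !hornerC !hornerZ hornerX.
by rewrite mulrA [z * v1]mulrC [z * v2]mulrC.
Qed.
Definition lineP (n : nat) (F : nat -> nat -> K) :=
  forall a b al be : nat, (0 < al)%N -> (0 < be)%N ->
    exists q : {poly K}, (size q <= n.+1)%N /\
      forall m : nat, F (a + m * al)%N (b + m * be)%N = q.[m%:R].
Lemma row_slice n F : lineP n F ->
  exists q : {poly K}, (size q <= n.+1)%N /\ forall a, F a 0%N = q.[a%:R].
Proof.
move=> hl.
pose E i j := F (i + 2 * j)%N (i + j)%N.
have [c hc] : exists c : nat -> nat -> K, forall i j,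
    E i j = \sum_(k < n.+1) \sum_(l < n.+1) c k l * (i%:R) ^+ k * (j%:R) ^+ l.
  apply: sep_joint => // [j|i].
    have [q [hq hqm]] := hl (2 * j)%N j 1%N 1%N isT isT.
    by exists q; split=> // i; rewrite /E -hqm; congr F; lia.
  have [q [hq hqm]] := hl i i 2%N 1%N isT isT.
  by exists q; split=> // j; rewrite /E -hqm; congr F; lia.
have ctop : forall k l, (k < n.+1)%N -> (l < n.+1)%N -> (n < k + l)%N -> c k l = 0.
  apply: top_degree => al al0.
  have [q [hq hqm]] := hl 0%N 0%N (al + 2)%N (al + 1)%N (ltn_addl _ (isT : (0 < 2)%N)) (ltn_addl _ (isT : (0 < 1)%N)).
  exists q; split=> // m; rewrite -hqm.
  have := hc (m * al)%N m; rewrite /E => e.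
  have -> : (0 + m * (al + 2) = m * al + 2 * m)%N by lia.
  have -> : (0 + m * (al + 1) = m * al + m)%N by lia.
  rewrite e; apply: eq_bigr => k _; apply: eq_bigr => l _.
  by rewrite natrM exprMn exprD; ring.
have [h [hh hhz]] := line_poly ctop 0 (-1) 0 1.
exists h; split => // a.
have [q [hq hqm]] := hl a 0%N a.+1 a.+1 isT isT.
have [h2 [_ hh2]] := line_poly ctop (- a%:R) (a.+1%:R) (a%:R) 0.
have qh2 : q = h2.
  apply: poly_eq_natS => m.
  rewrite -hqm -hh2.
  set t := (m.+1 * a.+1)%N.
  have ht : (a < t)%N by rewrite /t mulSn; lia.
  have -> : (a + t = (t - a) + 2 * a)%N by lia.
  have -> : (0 + t = (t - a) + a)%N by lia.
  rewrite -/(E _ _) hc; apply: eq_bigr => k _; apply: eq_bigr => l _.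
  rewrite natrB ?(ltnW ht) // /t natrM mulr0 addr0 [- _ + _]addrC.
  by [].
have := hqm 0%N; rewrite mul0n !addn0 => ->.
rewrite qh2 -hh2 -hhz; apply: eq_bigr => k _; apply: eq_bigr => l _.
by rewrite !mul0r !addr0 !add0r mulrN1 mulr1.
Qed.
Lemma lineP_swap n F : lineP n F -> lineP n (fun a b => F b a).
Proof. by move=> hl a b al be ha hb; apply: hl. Qed.
Lemma col_slice n F : lineP n F ->
  exists q : {poly K}, (size q <= n.+1)%N /\ forall b, F 0%N b = q.[b%:R].
Proof. by move=> /lineP_swap /row_slice. Qed.
End Poly1.
Section Addmul.
Variable T : Type.
Variable op : T -> T -> T.
Lemma addmulD s t a m : addmul op (addmul op s t a) t m = addmul op s t (a + m).
Proof. by rewrite /addmul addnC iterD. Qed.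
Hypothesis hA : associative op.
Lemma addmul_assoc u t k : op u (addmul op t t k) = addmul op u t k.+1.
Proof.
elim: k => [//|k IH].
by rewrite [addmul op t t k.+1]/addmul iterS -/(addmul _ _ _ _) hA IH.
Qed.
Lemma addmulM s t k m : addmul op s (addmul op t t k) m = addmul op s t (m * k.+1).
Proof.
elim: m => [//|m IH].
rewrite [LHS]/addmul iterS -/(addmul _ _ _ _) IH addmul_assoc addmulD.
by rewrite mulSn addnC.
Qed.
End Addmul.
Lemma addmul_prod (T1 T2 : Type) (op1 : T1 -> T1 -> T1) (op2 : T2 -> T2 -> T2) s t m :
  addmul (prod_op op1 op2) s t m = (addmul op1 s.1 t.1 m, addmul op2 s.2 t.2 m).
Proof.
elim: m => [|m IH]; first by case: s.
by rewrite [LHS]/addmul iterS -/(addmul _ _ _ _) IH.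
Qed.
Lemma p_lineP (R : realType) (J1 J2 : topologicalType)
  (op1 : J1 -> J1 -> J1) (op2 : J2 -> J2 -> J2)
  (hA1 : associative op1) (hA2 : associative op2) n (p : J1 * J2 -> R[i])
  (hp : is_poly_deg (prod_op op1 op2) n p) x t1 y t2 :
  lineP n (fun a b => p (addmul op1 x t1 a, addmul op2 y t2 b)).
Proof.
move=> a b al be ha hb.
have [q [hq hqm]] := hp.2 (addmul op1 x t1 a, addmul op2 y t2 b)
                          (addmul op1 t1 t1 al.-1, addmul op2 t2 t2 be.-1).
exists q; split => // m.
by rewrite -hqm addmul_prod /= !addmulM // !prednK // !addmulD.
Qed.
Section Cont.
Variable R : realType.
Variable J : topologicalType.
Local Notation C := R[i].
Lemma ReD (x y : C) : complex.Re (x + y) = complex.Re x + complex.Re y.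
Proof. by case: x; case: y. Qed.
Lemma ImD (x y : C) : complex.Im (x + y) = complex.Im x + complex.Im y.
Proof. by case: x; case: y. Qed.
Lemma ReM (x y : C) : complex.Re (x * y) = complex.Re x * complex.Re y - complex.Im x * complex.Im y.
Proof. by case: x => a b; case: y => c d. Qed.
Lemma ImM (x y : C) : complex.Im (x * y) = complex.Re x * complex.Im y + complex.Im x * complex.Re y.
Proof. by case: x => a b; case: y => c d. Qed.
Lemma contC_cst (c : C) : continuousC (fun _ : J => c).
Proof. by split; apply: cst_continuous. Qed.
Lemma contC_add (f g : J -> C) : continuousC f -> continuousC g ->
  continuousC (fun x => f x + g x).
Proof.
move=> [hf1 hf2] [hg1 hg2]; split.
  have -> : (fun x => complex.Re (f x + g x)) =
            (fun x => complex.Re (f x)) + (fun x => complex.Re (g x)).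
    by apply: funext => x; rewrite ReD.
  by move=> x; apply: continuousD; [exact: hf1 | exact: hg1].
have -> : (fun x => complex.Im (f x + g x)) =
          (fun x => complex.Im (f x)) + (fun x => complex.Im (g x)).
  by apply: funext => x; rewrite ImD.
by move=> x; apply: continuousD; [exact: hf2 | exact: hg2].
Qed.
Lemma contC_mul (f g : J -> C) : continuousC f -> continuousC g ->
  continuousC (fun x => f x * g x).
Proof.
move=> [hf1 hf2] [hg1 hg2]; split.
  have -> : (fun x => complex.Re (f x * g x)) =
            ((fun x => complex.Re (f x)) \* (fun x => complex.Re (g x))) -
            ((fun x => complex.Im (f x)) \* (fun x => complex.Im (g x))).
    by apply: funext => x; rewrite ReM.
  by move=> x; apply: continuousB; apply: continuousM; [exact: hf1|exact: hg1|exact: hf2|exact: hg2].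
have -> : (fun x => complex.Im (f x * g x)) =
          ((fun x => complex.Re (f x)) \* (fun x => complex.Im (g x))) +
          ((fun x => complex.Im (f x)) \* (fun x => complex.Re (g x))).
  by apply: funext => x; rewrite ImM.
by move=> x; apply: continuousD; apply: continuousM; [exact: hf1|exact: hg2|exact: hf2|exact: hg1].
Qed.
Lemma contC_sum (I : Type) (r : seq I) (P : pred I) (F : I -> J -> C) :
  (forall i, continuousC (F i)) -> continuousC (fun x => \sum_(i <- r | P i) F i x).
Proof.
move=> h; elim: r => [|a r IH].
  by under eq_fun => x do rewrite big_nil; apply: contC_cst.
under eq_fun => x do rewrite big_cons.
case: (P a) => //; exact: contC_add.
Qed.
Lemma contC_comp (U : topologicalType) (f : U -> C) (h : J -> U) :
  continuous h -> continuousC f -> continuousC (fun x => f (h x)).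
Proof.
move=> hh [h1 h2]; split => x.
  exact: (continuous_comp (hh x) (h1 (h x))).
exact: (continuous_comp (hh x) (h2 (h x))).
Qed.
End Cont.
Lemma fst_cont (T U : topologicalType) : continuous (fun x : T * U => x.1).
Proof. by move=> x; apply: cvg_fst. Qed.
Lemma snd_cont (T U : topologicalType) : continuous (fun x : T * U => x.2).
Proof. by move=> x; apply: cvg_snd. Qed.
Lemma pair_cont (T U : topologicalType) (x0 : T) : continuous (fun y : U => (x0, y)).
Proof. move=> y; apply: cvg_pair; [exact: cvg_cst | exact: cvg_id]. Qed.
Lemma pair_cont2 (T U : topologicalType) (y0 : U) : continuous (fun x : T => (x, y0)).
Proof. move=> y; apply: cvg_pair; [exact: cvg_id | exact: cvg_cst]. Qed.
Section IPD.
Variable R : realType.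
Variable J : topologicalType.
Variable op : J -> J -> J.
Local Notation C := R[i].
Lemma ipd_cst n (c : C) : is_poly_deg op n (fun _ => c).
Proof.
split; first exact: contC_cst.
move=> s t; exists c%:P; split; last by move=> m; rewrite hornerC.
exact: leq_trans (size_polyC_leq1 _) _.
Qed.
Lemma ipd_mono n n' (f : J -> C) : (n <= n')%N -> is_poly_deg op n f -> is_poly_deg op n' f.
Proof.
move=> le [hc hp]; split => // s t; have [q [hq hqm]] := hp s t.
by exists q; split => //; apply: leq_trans hq _.
Qed.
Lemma ipd_add n (f g : J -> C) : is_poly_deg op n f -> is_poly_deg op n g ->
  is_poly_deg op n (fun x => f x + g x).
Proof.
move=> [hcf hpf] [hcg hpg]; split; first exact: contC_add.
move=> s t; have [q [hq hqm]] := hpf s t; have [q' [hq' hqm']] := hpg s t.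
exists (q + q'); split; last by move=> m; rewrite hornerD hqm hqm'.
by apply: leq_trans (size_polyD _ _) _; rewrite geq_max hq hq'.
Qed.
Lemma ipd_scale n (c : C) (f : J -> C) : is_poly_deg op n f ->
  is_poly_deg op n (fun x => c * f x).
Proof.
move=> [hcf hpf]; split; first by apply: contC_mul => //; exact: contC_cst.
move=> s t; have [q [hq hqm]] := hpf s t.
exists (c *: q); split; last by move=> m; rewrite hornerZ hqm.
exact: leq_trans (size_scale_leq _ _) _.
Qed.
Lemma ipd_sum n (I : Type) (r : seq I) (P : pred I) (F : I -> J -> C) :
  (forall i, is_poly_deg op n (F i)) ->
  is_poly_deg op n (fun x => \sum_(i <- r | P i) F i x).
Proof.
move=> h; elim: r => [|a r IH].
  by under eq_fun => x do rewrite big_nil; apply: ipd_cst.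
under eq_fun => x do rewrite big_cons.
case: (P a) => //; exact: ipd_add.
Qed.
End IPD.
Lemma ipd_prod (R : realType) (J1 J2 : topologicalType)
  (op1 : J1 -> J1 -> J1) (op2 : J2 -> J2 -> J2) a b (f : J1 -> R[i]) (g : J2 -> R[i]) :
  is_poly_deg op1 a f -> is_poly_deg op2 b g ->
  is_poly_deg (prod_op op1 op2) (a + b) (fun x => f x.1 * g x.2).
Proof.
move=> [hcf hpf] [hcg hpg]; split.
  apply: contC_mul.
    exact: (contC_comp (@fst_cont _ _) hcf).
  exact: (contC_comp (@snd_cont _ _) hcg).
move=> s t; have [q [hq hqm]] := hpf s.1 t.1; have [q' [hq' hqm']] := hpg s.2 t.2.
exists (q * q'); split; last by move=> m; rewrite addmul_prod /= hornerM hqm hqm'.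
apply: leq_trans (size_polyMleq _ _) _; move: hq hq'; lia.
Qed.
Lemma exists_max (T : Type) (t0 : T) (f : T -> nat) (k : nat) :
  (forall t, (f t <= k)%N) -> exists t, forall t', (f t' <= f t)%N.
Proof.
move=> hb.
suff : forall j, (exists t, (j <= f t)%N) \/ (exists t, forall t', (f t' <= f t)%N).
  case/(_ k.+1) => // [[t ht]]; by move: (hb t); rewrite leqNgt ht.
elim => [|j [[t ht]|]]; [by left; exists t0 | | by right].
case: (boolp.pselect (exists t', (f t < f t')%N)) => [[t' ht']|nex].
  by left; exists t'; apply: leq_ltn_trans ht'.
right; exists t => t'; rewrite leqNgt; apply/negP => h; apply: nex; by exists t'.
Qed.
Lemma subspace_mx (F : fieldType) k (P : 'rV[F]_k -> Prop) :
  P 0 -> (forall a u v, P u -> P v -> P (a *: u + v)) ->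
  exists A : 'M[F]_k, forall v, P v <-> (v <= A)%MS.
Proof.
move=> P0 Pl.
have Pz : forall a u, P u -> P (a *: u) by move=> a u hu; rewrite -[_ *: u]addr0; apply: Pl.
have Pad : forall u v, P u -> P v -> P (u + v) by move=> u v hu hv; rewrite -[u]scale1r; apply: Pl.
pose Q (A : 'M[F]_k) := forall w : 'rV_k, (w <= A)%MS -> P w.
have Q0 : Q 0 by move=> w; rewrite submx0 => /eqP ->.
have [[A QA] hmax] := @exists_max _ (exist Q 0 Q0) (fun t => \rank (sval t)) k (fun t => rank_leq_col _).
exists A => v; split; last exact: (QA).
move=> Pv.
have QA' : Q (A + v)%MS.
  move=> w /sub_addsmxP [[u1 u2] ->] /=; apply: Pad.
    by apply: (QA); apply: submxMl.
  rewrite [u2]mx11_scalar mul_scalar_mx; exact: Pz.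
have := hmax (exist Q _ QA'); rewrite /= => hr.
have : (A + v <= A)%MS.
  by rewrite -(mxrank_leqif_sup (addsmxSl A v)); apply/eqP/anti_leq; rewrite hr mxrankS ?addsmxSl.
by apply: submx_trans; apply: addsmxSr.
Qed.
Lemma points_mx (F : fieldType) (J : Type) k (b : 'I_k -> J -> F) :
  exists N (X : 'I_N -> J),
    forall z, (\row_i b i z <= \matrix_(j < N, i < k) b i (X j))%MS.
Proof.
have x0 : 'I_0 -> J by case => m; rewrite ltn0.
pose V N (X : 'I_N -> J) := \matrix_(j < N, i < k) b i (X j).
have [[N X] hmax] := @exists_max _ (existT (fun N => 'I_N -> J) 0%N x0)
  (fun t => \rank (V (projT1 t) (projT2 t))) k (fun t => rank_leq_col _).
exists N, X => z.
pose X' (j : 'I_(N + 1)) := match fintype.split j with inl j1 => X j1 | inr _ => z end.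
have sub1 : (V N X <= V (N + 1)%N X')%MS.
  apply/row_subP => j.
  have -> : row j (V N X) = row (lshift 1 j) (V (N + 1)%N X').
    by apply/rowP => i; rewrite !mxE /X' (unsplitK (inl _ j)).
  exact: row_sub.
have := hmax (existT _ (N + 1)%N X'); rewrite /= => hr.
have sub2 : (V (N + 1)%N X' <= V N X)%MS.
  by rewrite -(mxrank_leqif_sup sub1); apply/eqP/anti_leq; rewrite hr mxrankS.
apply: submx_trans sub2.
have -> : \row_i b i z = row (rshift N (ord0 : 'I_1)) (V (N + 1)%N X').
  by apply/rowP => i; rewrite !mxE /X' (unsplitK (inr _ (ord0 : 'I_1))).
exact: row_sub.
Qed.
Section Main.
Variables (R : realType) (J1 J2 : topologicalType).
Variables (op1 : J1 -> J1 -> J1) (op2 : J2 -> J2 -> J2).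
Hypotheses (hA1 : associative op1) (hA2 : associative op2).
Variables (n k : nat) (b : 'I_k -> J1 -> R[i]).
Hypothesis hb : forall i, is_poly_deg op1 n (b i).
Hypothesis hspan : forall f, is_poly_deg op1 n f ->
  exists c : 'I_k -> R[i], f = (fun x => \sum_(i < k) c i * b i x).
Local Notation C := R[i].
Definition Lf (c : 'rV[C]_k) (x : J1) : C := (c *m \col_i b i x) 0 0.
Lemma LfE c x : Lf c x = \sum_i c 0 i * b i x.
Proof. by rewrite /Lf !mxE; apply: eq_bigr => i _; rewrite mxE. Qed.
Lemma LfD u v x : Lf (u + v) x = Lf u x + Lf v x.
Proof. by rewrite /Lf mulmxDl mxE. Qed.
Lemma LfN u x : Lf (- u) x = - Lf u x.
Proof. by rewrite /Lf mulNmx mxE. Qed.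
Lemma LfZ a u x : Lf (a *: u) x = a * Lf u x.
Proof. by rewrite /Lf -scalemxAl mxE. Qed.
Lemma Lf_sum (I : Type) (r : seq I) (P : pred I) F x :
  Lf (\sum_(i <- r | P i) F i) x = \sum_(i <- r | P i) Lf (F i) x.
Proof. by rewrite /Lf mulmx_suml summxE. Qed.
Lemma ipd_Lf c : is_poly_deg op1 n (Lf c).
Proof.
have -> : Lf c = fun x => \sum_i c 0 i * b i x by apply: funext => x; exact: LfE.
by apply: ipd_sum => i; apply: ipd_scale.
Qed.
Lemma Lf_span f : is_poly_deg op1 n f -> exists c, f = Lf c.
Proof.
move=> /hspan [c ->]; exists (\row_i c i); apply: funext => x.
by rewrite LfE; apply: eq_bigr => i _; rewrite mxE.
Qed.
Lemma recon_ex : exists N (X : 'I_N -> J1) (P : 'M[C]_(N, k)),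
  forall c x, Lf c x = Lf ((\row_j Lf c (X j)) *m P) x.
Proof.
have [N [X hX]] := points_mx b.
set V := \matrix_(j < N, i < k) b i (X j).
exists N, X, (pinvmx V^T) => c x.
have LV : forall c j, Lf c (X j) = (c *m V^T) 0 j.
  by move=> c' j; rewrite LfE !mxE; apply: eq_bigr => i _; rewrite !mxE.
have -> : \row_j Lf c (X j) = c *m V^T by apply/rowP => j; rewrite mxE LV.
set c' := c *m V^T *m pinvmx V^T.
have e : c' *m V^T = c *m V^T by rewrite mulmxKpV // submxMl.
have ker : forall z, Lf (c' - c) z = 0.
  move=> z; have [u hu] := submxP (hX z).
  have d0 : (c' - c) *m V^T = 0 by rewrite mulmxBl e subrr.
  rewrite LfE.
  transitivity (\sum_i (c' - c) 0 i * (u *m V) 0 i).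
    by apply: eq_bigr => i _; rewrite -hu !mxE.
  under eq_bigr => i _ do rewrite [(u *m V) _ _]mxE big_distrr.
  rewrite exchange_big; apply: big1 => j _ /=.
  transitivity (u 0 j * ((c' - c) *m V^T) 0 j); last by rewrite d0 mxE mulr0.
  rewrite [((c' - c) *m _) _ _]mxE big_distrr; apply: eq_bigr => i _; rewrite [V^T _ _]mxE [V _ _]mxE; exact: mulrCA.
have := ker x; rewrite LfD LfN => /eqP; rewrite subr_eq0 => /eqP <-.
done.
Qed.
Lemma filt_ex : exists U : nat -> 'M[C]_k,
  forall m v, is_poly_deg op1 m (Lf v) <-> (v <= U m)%MS.
Proof.
have h : forall m, exists A : 'M[C]_k, forall v, is_poly_deg op1 m (Lf v) <-> (v <= A)%MS.
  move=> m; apply: subspace_mx.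
    have -> : Lf 0 = fun _ => 0 by apply: funext => x; rewrite /Lf mul0mx mxE.
    exact: ipd_cst.
  move=> a u v hu hv.
  have -> : Lf (a *: u + v) = fun x => a * Lf u x + Lf v x.
    by apply: funext => x; rewrite LfD LfZ.
  by apply: ipd_add => //; apply: ipd_scale.
have [U hU] := choice h; by exists U.
Qed.
Section WithData.
Variables (N : nat) (X : 'I_N -> J1) (P : 'M[C]_(N, k)) (U : nat -> 'M[C]_k).
Hypothesis hrec : forall c x, Lf c x = Lf ((\row_j Lf c (X j)) *m P) x.
Hypothesis hU : forall m v, is_poly_deg op1 m (Lf v) <-> (v <= U m)%MS.
Definition Uprev m : 'M[C]_k := if m is m'.+1 then U m' else 0.
Definition D m : 'M[C]_k := (U m :\: Uprev m)%MS.
Lemma Umono m m' : (m <= m')%N -> (U m <= U m')%MS.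
Proof.
move=> le; apply/row_subP => i; apply/hU; apply: ipd_mono le _.
by apply/hU; apply: row_sub.
Qed.
Lemma Ufull (v : 'rV[C]_k) : (v <= U n)%MS.
Proof. by apply/hU; apply: ipd_Lf. Qed.
Lemma D_sub m : (D m <= U m)%MS.
Proof. exact: diffmxSl. Qed.
Lemma split_step M (w : 'rV[C]_k) : (w <= U M)%MS ->
  exists d e, (d <= D M)%MS /\ (e <= Uprev M)%MS /\ w = d + e.
Proof.
move=> hw; have := addsmx_diff_cap_eq (U M) (Uprev M).
move=> /eqmxP /andP [_ h]; have := submx_trans hw h.
case/sub_addsmxP => [[u1 u2] ->] /=.
exists (u1 *m (U M :\: Uprev M)%MS), (u2 *m (U M :&: Uprev M)%MS); split; first exact: submxMl.
split => //; apply: submx_trans (submxMl _ _) _; exact: capmxSr.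
Qed.
Lemma split_all M (w : 'rV[C]_k) : (w <= U M)%MS ->
  exists ws : nat -> 'rV[C]_k, (forall m, (ws m <= D m)%MS) /\ w = \sum_(m < M.+1) ws m.
Proof.
elim: M w => [|M IH] w hw.
  have [d [e [hd [he ->]]]] := split_step hw.
  move: he; rewrite /= submx0 => /eqP ->.
  exists (fun m => if m == 0%N then d else 0); split.
    by move=> m; case: eqP => [->|_] //; rewrite sub0mx.
  by rewrite big_ord1 /= addr0.
have [d [e [hd [he ->]]]] := split_step hw.
have [ws [hws ->]] := IH e he.
exists (fun m => if m == M.+1 then d else ws m); split.
  by move=> m; case: eqP => [->|_].
rewrite [RHS]big_ord_recr /= ?eqxx [RHS]addrC; congr (_ + _); apply: eq_bigr => i _.
by rewrite ifN // neq_ltn ltn_ord.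
Qed.
Lemma indep (s : nat) (vs : nat -> 'rV[C]_k) : (forall m, (vs m <= D m)%MS) ->
  forall M, ((\sum_(m < M) vs m)%R <= U s)%MS ->
  forall m, (s < m)%N -> (m < M)%N -> vs m = 0.
Proof.
move=> hvs; elim => [|M IH] hsum m hsm hmM; first by [].
case: (leqP M s) => hMs; first by move: hmM; rewrite ltnS => /leq_trans /(_ hMs); rewrite leqNgt hsm.
move: hsum; rewrite big_ord_recr /= => hsum.
have hrest : ((\sum_(m0 < M) vs m0)%R <= U M.-1)%MS.
  apply: summx_sub => i _; apply: submx_trans (hvs i) _.
  apply: submx_trans (D_sub _) _; apply: Umono; move: (ltn_ord i); lia.
have hUs : (U s <= U M.-1)%MS by apply: Umono; lia.
have hvM : vs M = 0.
  apply/eqP; rewrite -submx0 -(capmx_diff (U M) (Uprev M)).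
  rewrite sub_capmx hvs /=.
  have -> : Uprev M = U M.-1 by case: (M) hMs.
  have -> : vs M = (\sum_(m0 < M) vs m0 + vs M) - \sum_(m0 < M) vs m0 by rewrite addrC addKr.
  apply: addmx_sub; first exact: submx_trans hsum hUs.
  by rewrite -scaleN1r; apply: scalemx_sub.
have hsum' : ((\sum_(m0 < M) vs m0)%R <= U s)%MS by move: hsum; rewrite hvM addr0.
move: hmM; rewrite ltnS leq_eqVlt => /orP [/eqP -> // | hlt].
exact: IH hsum' m hsm hlt.
Qed.
Variable p : J1 * J2 -> C.
Hypothesis hp : is_poly_deg (prod_op op1 op2) n p.
Lemma row_ipd y : is_poly_deg op1 n (fun x => p (x, y)).
Proof.
split; first exact: (contC_comp (@pair_cont2 J1 J2 y) hp.1).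
move=> s t.
have [q [hq hqm]] := row_slice (p_lineP hA1 hA2 hp s t y y).
by exists q; split => // m; rewrite -hqm.
Qed.
Lemma col_poly x y t2 : exists G : {poly C}, (size G <= n.+1)%N /\
  forall b0, p (x, addmul op2 y t2 b0) = G.[b0%:R].
Proof.
have [q [hq hqm]] := col_slice (p_lineP hA1 hA2 hp x x y t2).
by exists q; split => // m; rewrite -hqm.
Qed.
Lemma decomp0 x y : p (x, y) = \sum_j p (X j, y) * Lf (row j P) x.
Proof.
have [c hc] := Lf_span (row_ipd y).
have hcx : forall x', p (x', y) = Lf c x' by move=> x'; rewrite -hc.
rewrite hcx hrec mulmx_sum_row Lf_sum; apply: eq_bigr => j _.
by rewrite LfZ mxE hcx.
Qed.
Lemma td_claim y t2 (G : 'I_N -> {poly C}) :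
  (forall j, (size (G j) <= n.+1)%N) ->
  (forall j b0, p (X j, addmul op2 y t2 b0) = (G j).[b0%:R]) ->
  forall l, is_poly_deg op1 (n - l) (Lf (\sum_j (G j)`_l *: row j P)).
Proof.
move=> hG hGe l; split; first exact: (ipd_Lf _).1.
move=> x t1.
have [W hW] := choice (fun j => (ipd_Lf (row j P)).2 x t1).
pose cTD k' l' := \sum_j (W j)`_k' * (G j)`_l'.
have ctop : forall k' l', (k' < n.+1)%N -> (l' < n.+1)%N -> (n < k' + l')%N -> cTD k' l' = 0.
  apply: top_degree => al al0.
  have [q [hq hqm]] := p_lineP hA1 hA2 hp x t1 y t2 0%N 0%N al0 (isT : (0 < 1)%N).
  exists q; split => // m; rewrite -hqm add0n add0n muln1 decomp0.
  rewrite [RHS](eq_bigr (fun j => \sum_(k' < n.+1) \sum_(l' < n.+1)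
       (W j)`_k' * (G j)`_l' * al%:R ^+ k' * m%:R ^+ (k' + l'))); last first.
    move=> j _; rewrite hGe (hW j).2 (horner_coef_wide _ (hW j).1) (horner_coef_wide _ (hG j)).
    rewrite mulrC mulr_suml; apply: eq_bigr => k' _; rewrite mulr_sumr; apply: eq_bigr => l' _.
    by rewrite natrM exprMn exprD; ring.
  symmetry; rewrite exchange_big; apply: eq_bigr => k' _.
  rewrite exchange_big; apply: eq_bigr => l' _.
  by rewrite /cTD !mulr_suml.
exists (\sum_j (G j)`_l *: W j); split.
  apply/leq_sizeP => k' hk'; rewrite coef_sum.
  case: (ltnP l n.+1) => hln; last first.
    by apply: big1 => j _; rewrite coefZ (nth_default _ (leq_trans (hG j) hln)) mul0r.
  case: (ltnP k' n.+1) => hkn.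
    rewrite -[RHS](ctop k' l) //; last by move: hk'; lia.
    by apply: eq_bigr => j _; rewrite coefZ mulrC.
  by apply: big1 => j _; rewrite coefZ [(W j)`_k']nth_default ?mulr0 //; exact: leq_trans (hW j).1 hkn.
move=> m; rewrite Lf_sum horner_sum; apply: eq_bigr => j _.
by rewrite LfZ hornerZ (hW j).2.
Qed.
Variable WS : 'I_N -> nat -> 'rV[C]_k.
Hypothesis hWS1 : forall j m, (WS j m <= D m)%MS.
Hypothesis hWS2 : forall j, row j P = \sum_(m < n.+1) WS j m.
Definition gg (m : nat) (i : 'I_k) (y : J2) : C :=
  \sum_j p (X j, y) * (WS j m *m pinvmx (D m)) 0 i.
Lemma decomp x y :
  p (x, y) = \sum_(m < n.+1) \sum_(i < k) Lf (row i (D m)) x * gg m i y.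
Proof.
rewrite decomp0.
have e : forall j, Lf (row j P) x =
    \sum_(m < n.+1) \sum_(i < k) (WS j m *m pinvmx (D m)) 0 i * Lf (row i (D m)) x.
  move=> j; rewrite hWS2 Lf_sum; apply: eq_bigr => m _.
  by rewrite -{1}(mulmxKpV (hWS1 j m)) mulmx_sum_row Lf_sum; apply: eq_bigr => i _; rewrite LfZ.
under eq_bigr => j _ do rewrite e mulr_sumr.
rewrite exchange_big; apply: eq_bigr => m _.
under eq_bigr => j _ do rewrite mulr_sumr.
rewrite exchange_big; apply: eq_bigr => i _.
rewrite /gg mulr_sumr; apply: eq_bigr => j _; ring.
Qed.
Lemma ff_ipd (m : nat) i : is_poly_deg op1 m (Lf (row i (D m))).
Proof. by apply/hU; apply: submx_trans (row_sub _ _) (D_sub m). Qed.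
Lemma gg_ipd (m : nat) i : (m <= n)%N -> is_poly_deg op2 (n - m) (gg m i).
Proof.
move=> hm; split.
  apply: contC_sum => j; apply: contC_mul; last exact: contC_cst.
  exact: (contC_comp (@pair_cont J1 J2 (X j)) hp.1).
move=> y t2.
have [G hG] := choice (fun j => col_poly (X j) y t2).
exists (\sum_j (WS j m *m pinvmx (D m)) 0 i *: G j); split; last first.
  move=> b0; rewrite /gg horner_sum; apply: eq_bigr => j _.
  by rewrite hornerZ (hG j).2 mulrC.
apply/leq_sizeP => l hl; rewrite coef_sum.
case: (ltnP l n.+1) => hln; last first.
  by apply: big1 => j _; rewrite coefZ (nth_default _ (leq_trans (hG j).1 hln)) mulr0.
pose Gam m' := \sum_j (G j)`_l *: WS j m'.
have hGam : forall m', (Gam m' <= D m')%MS.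
  by move=> m'; apply: summx_sub => j _; apply: scalemx_sub.
have hsum : ((\sum_(m' < n.+1) Gam m')%R <= U (n - l))%MS.
  have -> : (\sum_(m' < n.+1) Gam m')%R = \sum_j (G j)`_l *: row j P.
    rewrite exchange_big; apply: eq_bigr => j _; by rewrite hWS2 scaler_sumr.
  by apply/hU; apply: td_claim => [j|j b0]; [exact: (hG j).1 | exact: (hG j).2].
have G0 : Gam m = 0.
  apply: (indep hGam hsum); lia.
transitivity ((Gam m *m pinvmx (D m)) 0 i); last by rewrite G0 mul0mx mxE.
rewrite /Gam mulmx_suml summxE; apply: eq_bigr => j _.
by rewrite coefZ -scalemxAl !mxE mulrC.
Qed.
End WithData.
Lemma hard_dir (p : J1 * J2 -> C) : is_poly_deg (prod_op op1 op2) n p ->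
    exists (K : nat) (ms : 'I_K -> nat) (f : 'I_K -> J1 -> C) (g : 'I_K -> J2 -> C),
      (forall i, (ms i <= n)%N /\ is_poly_deg op1 (ms i) (f i) /\
                 is_poly_deg op2 (n - ms i) (g i)) /\
      p = (fun x => \sum_(i < K) f i x.1 * g i x.2).
Proof.
move=> hp.
have [N [X [P hrec]]] := recon_ex.
have [U hU] := filt_ex.
have hw : forall j, exists ws : nat -> 'rV[C]_k,
    (forall m, (ws m <= D U m)%MS) /\ row j P = \sum_(m < n.+1) ws m.
  by move=> j; apply: split_all (Ufull hU _).
have [WS hWS] := choice hw.
exists #|{: 'I_n.+1 * 'I_k}|,
  (fun t : 'I_#|{: 'I_n.+1 * 'I_k}| => ((enum_val t).1 : nat)),
  (fun t : 'I_#|{: 'I_n.+1 * 'I_k}| => Lf (row (enum_val t).2 (D U (enum_val t).1))),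
  (fun t : 'I_#|{: 'I_n.+1 * 'I_k}| => gg X U p WS (enum_val t).1 (enum_val t).2).
split.
  move=> t; split; first by rewrite -ltnS ltn_ord.
  split; first exact: ff_ipd hU _ _.
  apply: (gg_ipd hrec hU hp (fun j m => (hWS j).1 m) (fun j => (hWS j).2)).
  by rewrite -ltnS ltn_ord.
apply: funext => -[x y] /=.
rewrite (decomp hrec hp (fun j m => (hWS j).1 m) (fun j => (hWS j).2)) pair_big /=.
by rewrite (big_enum_val (A := {: 'I_n.+1 * 'I_k})).
Qed.
End Main.
Unset Implicit Arguments.
Theorem lemma3p2 (R : realType) (J1 J2 : topologicalType)
  (op1 : J1 -> J1 -> J1) (op2 : J2 -> J2 -> J2)
  (h1 : abelian_top_semigroup op1) (h2 : abelian_top_semigroup op2)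
  (n : nat) (hfin : Pn_finite_dim R op1 n) :
  forall p : J1 * J2 -> R[i],
    is_poly_deg (prod_op op1 op2) n p <->
    exists (k : nat) (ms : 'I_k -> nat) (f : 'I_k -> J1 -> R[i])
           (g : 'I_k -> J2 -> R[i]),
      (forall i, (ms i <= n)%N /\ is_poly_deg op1 (ms i) (f i) /\
                 is_poly_deg op2 (n - ms i) (g i)) /\
      p = (fun x => \sum_(i < k) f i x.1 * g i x.2).
Proof.
move=> p; split.
  move=> hp; have [k [b [hb hspan]]] := hfin.
  exact: (hard_dir h1.1 h2.1 hb hspan hp).
case=> K [ms [f [g [hfg ->]]]].
apply: ipd_sum => t; have [hm [hf hg]] := hfg t.
by have := ipd_prod hf hg; rewrite subnKC.
Qed.
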